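(* Let $\alpha>2$ and $N>0$, and define for $p\in[0,1]$ and $\beta>0$ \[ R(p,\beta)=p\,\log(1+\beta)\,e^{-N p\,\beta^{2/\alpha}} . \] Let $\Lambda^*=\Lambda^*(\alpha)>0$ denote the unique solution of \[ \frac{\alpha}{2}=\left(1+{\Lambda^*}^{\alpha/2}\right)\log\left(1+\frac{1}{{\Lambda^*}^{\alpha/2}}\right). \] If $N>\Lambda^*$, then $R$ is maximized over $[0,1]\times(0,\infty)$ at $p^*=\Lambda^*/N$ and $\beta^*={\Lambda^*}^{-\alpha/2}$. If $N\le\Lambda^*$, then $R$ is maximized at $p^*=1$ and $\beta^*$ equal to the unique solution of \[ \frac{\alpha}{2N{\beta^*}^{2/\alpha}}=\left(1+\frac{1}{\beta^*}\right)\log(1+\beta^* ). \]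
   Context: $R(p,\beta)$ is the limiting expected throughput per link of a single wireless network using a random access protocol with access probability $p$ and target signal-to-interference ratio $\beta$, where $N$ is the average number of nodes per transmission disc and $\alpha$ is the pathloss exponent. $\log$ denotes the natural logarithm. *)

(* Defs.v *)
From Stdlib Require Import Reals.
Open Scope R_scope.

(* R(p,beta) = p log(1+beta) exp(-N p beta^(2/alpha)); beta > 0 so Rpower is the usual power. *)
Definition rate (N alpha p beta : R) : R :=
  p * ln (1 + beta) * exp (- (N * p * Rpower beta (2 / alpha))).

Definition is_maximizer (f : R -> R -> R) (p0 b0 : R) : Prop :=
  (0 <= p0 <= 1) /\ 0 < b0 /\
  forall p b, 0 <= p <= 1 -> 0 < b -> f p b <= f p0 b0.

Definition lambda_star_eq (alpha L : R) : Prop :=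
  alpha / 2 = (1 + Rpower L (alpha / 2)) * ln (1 + / Rpower L (alpha / 2)).

Definition beta_star_eq (alpha N b : R) : Prop :=
  alpha / (2 * N * Rpower b (2 / alpha)) = (1 + / b) * ln (1 + b).

(* Main.v *)
Require Import Defs.
From Stdlib Require Import Reals Lra.
From Coquelicot Require Import Coquelicot.
Open Scope R_scope.

Definition phi x := (1 + /x) * ln (1+x).

Lemma mono_le f f' x y : x <= y ->
  (forall c, x <= c <= y -> derivable_pt_lim f c (f' c)) ->
  (forall c, x < c < y -> 0 <= f' c) -> f x <= f y.
Proof.
  intros Hxy Hd Hp. destruct (Req_dec x y) as [->|Hne]; [lra|].
  destruct (MVT_cor2 f f' x y ltac:(lra) Hd) as [c [Hc1 Hc2]].
  assert (0 <= f' c * (y - x)) by (apply Rmult_le_pos; [apply Hp; lra| lra]). lra.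
Qed.

Lemma mono_ge f f' x y : x <= y ->
  (forall c, x <= c <= y -> derivable_pt_lim f c (f' c)) ->
  (forall c, x < c < y -> f' c <= 0) -> f y <= f x.
Proof.
  intros Hxy Hd Hp. destruct (Req_dec x y) as [->|Hne]; [lra|].
  destruct (MVT_cor2 f f' x y ltac:(lra) Hd) as [c [Hc1 Hc2]].
  assert (0 <= - f' c * (y - x)) by (apply Rmult_le_pos; [assert (f' c <= 0) by (apply Hp; lra); lra| lra]). lra.
Qed.

Lemma mono_lt f f' x y : x < y ->
  (forall c, x <= c <= y -> derivable_pt_lim f c (f' c)) ->
  (forall c, x < c < y -> 0 < f' c) -> f x < f y.
Proof.
  intros Hxy Hd Hp.
  destruct (MVT_cor2 f f' x y Hxy Hd) as [c [Hc1 Hc2]].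
  assert (0 < f' c * (y - x)) by (apply Rmult_lt_0_compat; [apply Hp; lra| lra]). lra.
Qed.

Lemma phi_der x : 0 < x -> derivable_pt_lim phi x ((x - ln(1+x))/(x*x)).
Proof. intro Hx. apply is_derive_Reals. unfold phi. auto_derive. lra.
field. lra. Qed.

Lemma ln_lt_x x : 0 < x -> ln (1+x) < x.
Proof. intro Hx. pose proof (exp_ineq1 x ltac:(lra)).
  rewrite <- (ln_exp x) at 2. apply ln_increasing; lra. Qed.

Lemma ln_pos1 x : 0 < x -> 0 < ln (1+x).
Proof. intro Hx. rewrite <- ln_1. apply ln_increasing; lra. Qed.

Lemma phi_incr x y : 0 < x -> x < y -> phi x < phi y.
Proof.
  intros Hx Hxy. apply (mono_lt phi (fun x => (x - ln(1+x))/(x*x))); auto.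
  - intros c Hc. apply phi_der. lra.
  - intros c Hc. pose proof (ln_lt_x c ltac:(lra)).
    apply Rdiv_lt_0_compat; [lra| apply Rmult_lt_0_compat; lra].
Qed.

Lemma phi_le x : 0 < x -> phi x < 1 + x.
Proof. intro Hx. unfold phi. pose proof (ln_lt_x x Hx).
  assert (0 < 1 + / x) by (pose proof (Rinv_0_lt_compat x Hx); lra).
  apply Rlt_le_trans with ((1+/x)*x); [apply Rmult_lt_compat_l; lra | right; field; lra]. Qed.

Lemma phi_ge x : 0 < x -> ln (1+x) < phi x.
Proof. intro Hx. unfold phi. pose proof (ln_pos1 x Hx).
  pose proof (Rinv_0_lt_compat x Hx).
  assert (0 < / x * ln (1+x)) by (apply Rmult_lt_0_compat; lra).
  replace ((1 + /x) * ln (1+x)) with (ln (1+x) + / x * ln (1+x)) by ring. lra. Qed.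

Lemma phi_cont x : 0 < x -> continuity_pt phi x.
Proof. intro Hx. apply derivable_continuous_pt. exists ((x - ln(1+x))/(x*x)). apply phi_der; auto. Qed.

Lemma exp_ge x : 1 + x <= exp x.
Proof. apply exp_ineq1_le. Qed.

Lemma pw_lt a x y : 0 < a -> 0 < x -> x < y -> Rpower x a < Rpower y a.
Proof. intros. unfold Rpower. apply exp_increasing. apply Rmult_lt_compat_l; auto.
  apply ln_increasing; auto. Qed.

Lemma pw_le_inv a x y : 0 < a -> 0 < x -> 0 < y -> Rpower x a <= Rpower y a -> x <= y.
Proof. intros. destruct (Rle_lt_dec x y); auto. pose proof (pw_lt a y x); lra. Qed.

Lemma pw_pos x a : 0 < Rpower x a.
Proof. unfold Rpower. apply exp_pos. Qed.

Lemma pw_pw x a e : 0 < x -> e * a = 1 -> Rpower (Rpower x e) a = x.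
Proof. intros. rewrite Rpower_mult, H0. apply Rpower_1; auto. Qed.

Lemma pb1 c p : 0 < c -> 0 <= p -> p * exp (-(c*p)) <= / (exp 1 * c).
Proof.
  intros Hc Hp. pose proof (exp_ge (c*p - 1)).
  assert (E : exp (-(c*p)) = / exp 1 * / exp (c*p - 1)).
  { rewrite <- Rinv_mult, <- exp_plus. rewrite <- exp_Ropp. f_equal. ring. }
  rewrite E. pose proof (exp_pos 1). pose proof (exp_pos (c*p-1)).
  apply (Rmult_le_reg_r (exp 1 * c * exp (c*p-1))).
  { apply Rmult_lt_0_compat; [apply Rmult_lt_0_compat|]; lra. }
  field_simplify; try lra. all: nra.
Qed.

Lemma pb2 c p : 0 < c <= 1 -> 0 <= p <= 1 -> p * exp (-(c*p)) <= exp (- c).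
Proof.
  intros Hc Hp. replace (- c) with (-(c*p) + (-(c - c*p))) by ring.
  rewrite exp_plus. pose proof (exp_ge (-(c - c*p))). pose proof (exp_pos (-(c*p))).
  rewrite (Rmult_comm (exp _)). apply Rmult_le_compat_r; [lra|]. nra.
Qed.

Lemma phi_inj x y : 0 < x -> 0 < y -> phi x = phi y -> x = y.
Proof. intros. destruct (Rtotal_order x y) as [H2|[H2|H2]]; auto.
  pose proof (phi_incr x y H H2); lra. pose proof (phi_incr y x H0 H2); lra. Qed.

Lemma bstar_exists al : 2 < al -> exists b, 0 < b /\ phi b = al/2.
Proof.
  intro Ha. set (x0 := (al/2 - 1)/2). set (y0 := exp al - 1).
  pose proof (exp_ineq1 al ltac:(lra)).
  assert (Hx0 : 0 < x0) by (unfold x0; lra).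
  assert (Hxy : x0 < y0) by (unfold x0, y0; lra).
  destruct (Ranalysis5.IVT_interv (fun x => phi x - al/2) x0 y0) as [z [Hz1 Hz2]]; auto.
  - intros c Hc. apply continuity_pt_minus. apply phi_cont; lra. apply continuity_pt_const. intros u v; auto.
  - pose proof (phi_le x0 Hx0). unfold x0 in *. lra.
  - pose proof (phi_ge y0 ltac:(lra)). unfold y0 in *. rewrite Rplus_minus, ln_exp in H0. lra.
  - exists z. split; lra.
Qed.

Definition hf a x := ln (1+x) * exp (-(a * ln x)).
Definition kf N a x := ln (1+x) * exp (-(N * exp (a * ln x))).

Lemma h_der a x : 0 < x -> derivable_pt_lim (hf a) x (exp(-(a*ln x))/(1+x) * (1 - a*phi x)).
Proof. intro Hx. apply is_derive_Reals. unfold hf. auto_derive. lra. unfold phi. field. lra. Qed.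
Lemma k_der N a x : 0 < x -> derivable_pt_lim (kf N a) x (exp(-(N*exp(a*ln x)))/(1+x) * (1 - N*a*exp(a*ln x)*phi x)).
Proof. intro Hx. apply is_derive_Reals. unfold kf. auto_derive. lra. unfold phi. field. lra. Qed.

Lemma posq u x : 0 < x -> 0 < exp u / (1 + x).
Proof. intros. apply Rdiv_lt_0_compat. apply exp_pos. lra. Qed.

Lemma hmax a bs : 0 < a -> 0 < bs -> a * phi bs = 1 -> forall x, 0 < x -> hf a x <= hf a bs.
Proof.
  intros Ha Hb He x Hx. destruct (Rle_lt_dec x bs).
  - apply (mono_le (hf a) (fun x => exp(-(a*ln x))/(1+x) * (1 - a*phi x)) x bs r); [intros; apply h_der; lra|].
    intros c Hc. pose proof (posq (-(a*ln c)) c ltac:(lra)).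
    pose proof (phi_incr c bs ltac:(lra) ltac:(lra)).
    apply Rmult_le_pos; [lra|]. assert (a * phi c < a * phi bs) by (apply Rmult_lt_compat_l; lra). lra.
  - apply (mono_ge (hf a) (fun x => exp(-(a*ln x))/(1+x) * (1 - a*phi x)) bs x ltac:(lra)); [intros; apply h_der; lra|].
    intros c Hc. pose proof (posq (-(a*ln c)) c ltac:(lra)).
    pose proof (phi_incr bs c ltac:(lra) ltac:(lra)).
    assert (a * phi c > a * phi bs) by (apply Rmult_lt_compat_l; lra).
    assert (0 <= exp (- (a * ln c)) / (1 + c) * - (1 - a * phi c)) by (apply Rmult_le_pos; lra). lra.
Qed.

Lemma hdecr a bs : 0 < a -> 0 < bs -> a * phi bs = 1 -> forall x y, bs <= x -> x <= y -> hf a y <= hf a x.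
Proof.
  intros Ha Hb He x y H1 H2.
  apply (mono_ge (hf a) (fun x => exp(-(a*ln x))/(1+x) * (1 - a*phi x)) x y H2); [intros; apply h_der; lra|].
  intros c Hc. pose proof (posq (-(a*ln c)) c ltac:(lra)).
  pose proof (phi_incr bs c ltac:(lra) ltac:(lra)).
  assert (a * phi c > a * phi bs) by (apply Rmult_lt_compat_l; lra).
  assert (0 <= exp (- (a * ln c)) / (1 + c) * - (1 - a * phi c)) by (apply Rmult_le_pos; lra). lra.
Qed.

Lemma kmax N a b : 0 < N -> 0 < a -> 0 < b -> N * a * Rpower b a * phi b = 1 ->
  forall x, 0 < x -> kf N a x <= kf N a b.
Proof.
  intros HN Ha Hb He x Hx. unfold Rpower in He.
  assert (HNa : 0 < N * a) by (apply Rmult_lt_0_compat; lra).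
  destruct (Rle_lt_dec x b).
  - apply (mono_le (kf N a) (fun x => exp(-(N*exp(a*ln x)))/(1+x) * (1 - N*a*exp(a*ln x)*phi x)) x b r); [intros; apply k_der; lra|].
    intros c Hc. pose proof (posq (-(N*exp(a*ln c))) c ltac:(lra)).
    pose proof (phi_incr c b ltac:(lra) ltac:(lra)).
    pose proof (pw_lt a c b Ha ltac:(lra) ltac:(lra)). unfold Rpower in *.
    pose proof (exp_pos (a * ln c)).
    pose proof (ln_pos1 c ltac:(lra)). pose proof (phi_ge c ltac:(lra)).
    assert (N*a*exp (a * ln c) * phi c < N*a*exp (a * ln b) * phi b).
    { apply Rmult_le_0_lt_compat; try lra. apply Rmult_le_pos; lra.
      apply Rmult_lt_compat_l; lra. }
    apply Rmult_le_pos; lra.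
  - apply (mono_ge (kf N a) (fun x => exp(-(N*exp(a*ln x)))/(1+x) * (1 - N*a*exp(a*ln x)*phi x)) b x ltac:(lra)); [intros; apply k_der; lra|].
    intros c Hc. pose proof (posq (-(N*exp(a*ln c))) c ltac:(lra)).
    pose proof (phi_incr b c ltac:(lra) ltac:(lra)).
    pose proof (pw_lt a b c Ha ltac:(lra) ltac:(lra)). unfold Rpower in *.
    pose proof (exp_pos (a * ln b)).
    pose proof (ln_pos1 b ltac:(lra)). pose proof (phi_ge b ltac:(lra)).
    assert (N*a*exp (a * ln b) * phi b < N*a*exp (a * ln c) * phi c).
    { apply Rmult_le_0_lt_compat; try lra. apply Rmult_le_pos; lra.
      apply Rmult_lt_compat_l; lra. }
    assert (0 <= exp (-(N*exp(a*ln c))) / (1 + c) * - (1 - N*a*exp(a*ln c)*phi c)) by (apply Rmult_le_pos; lra). lra.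
Qed.

Lemma hf_eq a x : hf a x = ln (1+x) * / Rpower x a.
Proof. unfold hf, Rpower. rewrite exp_Ropp. reflexivity. Qed.

Lemma rate_eq N al p b : rate N al p b = ln (1+b) * (p * exp (-((N * Rpower b (2/al)) * p))).
Proof. unfold rate. replace (N*p*Rpower b (2/al)) with ((N * Rpower b (2/al)) * p) by ring. ring. Qed.

Lemma bound_h N al p b : 0 < N -> 0 <= p -> 0 < b ->
  rate N al p b <= hf (2/al) b * / (exp 1 * N).
Proof.
  intros HN Hp Hb. rewrite rate_eq, hf_eq.
  pose proof (pw_pos b (2/al)). pose proof (ln_pos1 b Hb). pose proof (exp_pos 1).
  apply Rle_trans with (ln (1+b) * / (exp 1 * (N * Rpower b (2/al)))).
  - apply Rmult_le_compat_l; [lra|]. apply pb1; auto. apply Rmult_lt_0_compat; lra.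
  - right. field. repeat split; lra.
Qed.

Lemma bound_k N al p b : 0 < N -> 0 <= p <= 1 -> 0 < b -> N * Rpower b (2/al) <= 1 ->
  rate N al p b <= kf N (2/al) b.
Proof.
  intros HN Hp Hb Hc. rewrite rate_eq. unfold kf. fold (Rpower b (2/al)).
  pose proof (pw_pos b (2/al)). pose proof (ln_pos1 b Hb).
  apply Rmult_le_compat_l; [lra|]. apply pb2; auto. split; auto.
  apply Rmult_lt_0_compat; lra.
Qed.

Lemma Lfacts al L : 2 < al -> 0 < L -> lambda_star_eq al L ->
  0 < Rpower L (-(al/2)) /\ phi (Rpower L (-(al/2))) = al/2 /\
  Rpower (Rpower L (-(al/2))) (2/al) = / L.
Proof.
  intros Ha HL Heq. unfold lambda_star_eq in Heq.
  assert (E : Rpower L (al/2) = / Rpower L (-(al/2))).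
  { rewrite Rpower_Ropp, Rinv_inv. reflexivity. }
  rewrite E, Rinv_inv in Heq.
  split; [apply pw_pos|]. split; [unfold phi; lra|].
  rewrite Rpower_mult. replace (-(al/2) * (2/al)) with (Ropp 1) by (field; lra).
  rewrite Rpower_Ropp, Rpower_1; auto.
Qed.

Definition psi al N b := phi b - al / (2 * N * Rpower b (2/al)).

Lemma psi_incr al N x y : 2 < al -> 0 < N -> 0 < x -> x < y -> psi al N x < psi al N y.
Proof.
  intros Ha HN Hx Hxy. unfold psi.
  pose proof (phi_incr x y Hx Hxy).
  assert (Hp : 0 < 2/al) by (apply Rdiv_lt_0_compat; lra).
  pose proof (pw_lt (2/al) x y Hp Hx Hxy). pose proof (pw_pos x (2/al)).
  assert (/ (2 * N * Rpower y (2/al)) < / (2 * N * Rpower x (2/al))).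
  { apply Rinv_lt_contravar. apply Rmult_lt_0_compat; apply Rmult_lt_0_compat; lra.
    apply Rmult_lt_compat_l; lra. }
  unfold Rdiv at 2 4. assert (al * / (2 * N * Rpower y (2/al)) < al * / (2 * N * Rpower x (2/al)))
    by (apply Rmult_lt_compat_l; lra). lra.
Qed.


Lemma psi_cont al N x : 0 < N -> 0 < x -> continuity_pt (psi al N) x.
Proof.
  intros HN Hx. apply derivable_continuous_pt, ex_derive_Reals_0. unfold psi, phi, Rpower.
  auto_derive. pose proof (exp_pos (2 / al * ln x)).
  repeat split; try lra. apply Rgt_not_eq. apply Rmult_lt_0_compat; lra.
Qed.

Theorem theorem1 (alpha N : R) (Halpha : 2 < alpha) (HN : 0 < N) :
  (exists! L, 0 < L /\ lambda_star_eq alpha L) /\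
  forall L, 0 < L -> lambda_star_eq alpha L ->
    (L < N -> is_maximizer (rate N alpha) (L / N) (Rpower L (- (alpha / 2)))) /\
    (N <= L ->
       (exists! b, 0 < b /\ beta_star_eq alpha N b) /\
       forall b, 0 < b -> beta_star_eq alpha N b ->
         is_maximizer (rate N alpha) 1 b).
Proof.
  assert (Ha : 0 < 2/alpha) by (apply Rdiv_lt_0_compat; lra).
  assert (Hae : (alpha/2) * (2/alpha) = 1) by (field; lra).
  split.
  { destruct (bstar_exists alpha Halpha) as [b [Hb Hphi]].
    exists (Rpower b (-(2/alpha))). split.
    - split; [apply pw_pos|]. unfold lambda_star_eq.
      rewrite Rpower_mult. replace (-(2/alpha) * (alpha/2)) with (Ropp 1) by (field; lra).
      rewrite Rpower_Ropp, Rpower_1, Rinv_inv; auto.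
    - intros L' [HL' Heq]. destruct (Lfacts alpha L' Halpha HL' Heq) as [H1 [H2 H3]].
      assert (E : Rpower L' (-(alpha/2)) = b) by (apply phi_inj; auto; lra).
      rewrite <- E. apply pw_pw; auto. field; lra. }
  intros L HL Heq. destruct (Lfacts alpha L Halpha HL Heq) as [Hbs [Hphi Hpw]].
  set (bs := Rpower L (- (alpha / 2))) in *.
  assert (Hphi' : (2/alpha) * phi bs = 1) by (rewrite Hphi; field; lra).
  pose proof (exp_pos 1) as He1.
  split.
  { intros HLN. split; [split; [apply Rlt_le, Rdiv_lt_0_compat; lra| apply Rle_div_l; lra]|].
    split; auto. intros p b Hp Hb.
    eapply Rle_trans; [apply bound_h; auto; lra|].
    apply Rle_trans with (hf (2/alpha) bs * / (exp 1 * N)).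
    { apply Rmult_le_compat_r. apply Rlt_le, Rinv_0_lt_compat, Rmult_lt_0_compat; lra.
      apply hmax; auto. }
    right. rewrite hf_eq, Hpw. unfold rate. rewrite Hpw.
    replace (N * (L/N) * / L) with 1 by (field; lra). rewrite exp_Ropp.
    field. lra. }
  intros HNL.
  set (b1 := Rpower (/N) (alpha/2)).
  assert (Hb1 : 0 < b1) by apply pw_pos.
  assert (Hb1a : Rpower b1 (2/alpha) = / N) by (apply pw_pw; auto; apply Rinv_0_lt_compat; lra).
  assert (Hbsb1 : bs <= b1).
  { apply (pw_le_inv (2/alpha)); auto. rewrite Hpw, Hb1a. apply Rinv_le_contravar; lra. }
  assert (Eq : forall b, 0 < b -> (beta_star_eq alpha N b <-> psi alpha N b = 0)).
  { intros b Hb. unfold beta_star_eq, psi, phi. split; intro; lra. }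
  split.
  { assert (Ex : exists b, 0 < b /\ psi alpha N b = 0).
    { assert (Hpsi1 : 0 <= psi alpha N b1).
      { unfold psi. rewrite Hb1a. replace (alpha / (2 * N * / N)) with (alpha/2) by (field; lra).
        destruct (Req_dec bs b1) as [E|E]. rewrite <- E; lra.
        pose proof (phi_incr bs b1 Hbs ltac:(lra)). lra. }
      destruct (Req_dec (psi alpha N b1) 0) as [Z|Z]; [exists b1; auto|].
      set (b0 := Rpower (/(2*N+2)) (alpha/2)).
      assert (Hb0 : 0 < b0) by apply pw_pos.
      assert (Hb0a : Rpower b0 (2/alpha) = / (2*N+2)) by (apply pw_pw; auto; apply Rinv_0_lt_compat; lra).
      assert (Hb0l : b0 < 1).
      { unfold b0, Rpower. rewrite <- exp_0. apply exp_increasing.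
        assert (ln (/ (2*N+2)) < 0).
        { rewrite <- ln_1. apply ln_increasing. apply Rinv_0_lt_compat; lra.
          rewrite <- Rinv_1. apply Rinv_lt_contravar; lra. }
        assert (0 < alpha/2) by lra. nra. }
      assert (Hpsi0 : psi alpha N b0 < 0).
      { unfold psi. rewrite Hb0a. pose proof (phi_le b0 Hb0).
        replace (alpha / (2 * N * / (2 * N + 2))) with (alpha + alpha / N) by (field; lra).
        assert (0 < alpha / N) by (apply Rdiv_lt_0_compat; lra). lra. }
      assert (Hlt : b0 < b1).
      { destruct (Rlt_le_dec b0 b1); auto.
        destruct (Req_dec b1 b0) as [E|E]. rewrite E in Hpsi1; lra.
        pose proof (psi_incr alpha N b1 b0 Halpha HN Hb1 ltac:(lra)). lra. }
      destruct (Ranalysis5.IVT_interv (psi alpha N) b0 b1) as [z [Hz1 Hz2]]; auto.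
      - intros c Hc. apply psi_cont; lra.
      - lra.
      - exists z. split; auto; lra. }
    destruct Ex as [b [Hb Hpb]]. exists b. split; [split; auto; apply Eq; auto|].
    intros b' [Hb' Hq]. apply Eq in Hq; auto.
    destruct (Rtotal_order b b') as [H|[H|H]]; auto.
    pose proof (psi_incr alpha N b b' Halpha HN Hb H); lra.
    pose proof (psi_incr alpha N b' b Halpha HN Hb' H); lra. }
  intros b Hb Hbeq.
  assert (Hk : N * (2/alpha) * Rpower b (2/alpha) * phi b = 1).
  { unfold beta_star_eq in Hbeq. change ((1 + / b) * ln (1 + b)) with (phi b) in Hbeq.
    rewrite <- Hbeq. pose proof (pw_pos b (2/alpha)). field. repeat split; lra. }
  assert (Hkb : kf N (2/alpha) b = rate N alpha 1 b).
  { unfold kf, rate. fold (Rpower b (2/alpha)). rewrite Rmult_1_r, Rmult_1_l. reflexivity. }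
  split; [lra|]. split; auto. intros p x Hp Hx.
  rewrite <- Hkb.
  pose proof (pw_pos x (2/alpha)).
  destruct (Rle_lt_dec (N * Rpower x (2/alpha)) 1) as [Hc|Hc].
  - eapply Rle_trans; [apply bound_k; auto|]. apply kmax; auto.
  - eapply Rle_trans; [apply bound_h; auto; lra|].
    assert (Hxb1 : b1 <= x).
    { apply (pw_le_inv (2/alpha)); auto. rewrite Hb1a.
      apply Rlt_le. apply (Rmult_lt_reg_l N); auto. rewrite Rinv_r; lra. }
    apply Rle_trans with (hf (2/alpha) b1 * / (exp 1 * N)).
    { apply Rmult_le_compat_r. apply Rlt_le, Rinv_0_lt_compat, Rmult_lt_0_compat; lra.
      apply (hdecr (2/alpha) bs); auto. }
    apply Rle_trans with (kf N (2/alpha) b1).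
    { right. rewrite hf_eq, Hb1a. unfold kf. fold (Rpower b1 (2/alpha)). rewrite Hb1a.
      replace (N * / N) with 1 by (field; lra). rewrite exp_Ropp. field. lra. }
    apply kmax; auto.
Qed.
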